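(* Let $x\in S\cap\mathbb{R}^n$ and $J\subset[n]$. Then $J$ is a feasible descent direction at $x$ (i.e. $x+\delta\chi_J\in S$ and $f(x+\delta\chi_J)<f(x)$ for all $0<\delta<\epsilon(x)$) if and only if: (1) for any $j\in J$ and any $w_i\in\mathcal{N}^-_W(j,x)$ there exists $j'\in\mathcal{N}^-_V(w_i,x)$ with $j'\in J$; and (2) $\mu(J,x)<0$.
   Context: $\mathbb{R}_{\max}=\mathbb{R}\cup\{-\infty\}$, $\chi_J$ the indicator vector of $J$. Data: $A^\pm=(a^\pm_{i,j})\in\mathbb{R}_{\max}^{m\times n}$, $C=(c_{k,j})\in\mathbb{R}_{\max}^{p\times n}$, $\mu^+\in\mathbb{Z}_{\ge0}^p$, $\mu^-\in\mathbb{Z}_{\ge0}^n$; $A=(a_{i,j})$, $a_{i,j}=\max(a^+_{i,j},a^-_{i,j})$. $f(x)=\sum_k\mu^+_k\max_j(c_{k,j}+x_j)-\sum_j\mu^-_jx_j$; $S=\{x:\max_j(a^+_{i,j}+x_j)\ge\max_j(a^-_{i,j}+x_j)\ \forall i\in[m]\}$. Standing assumptions: each row of $A$ and $C$ has a finite entry; $\sum_k\mu^+_k=\sum_j\mu^-_j$; the undirected graph on $\{u_k\}\cup[n]\cup\{w_i\}$ with edges $\{u_k,j\}$ ($c_{k,j}\ne-\infty$), $\{w_i,j\}$ ($a_{i,j}\ne-\infty$) is connected. $\epsilon(x)$ is the smallest positive value among $|(a_{i,j_1}+x_{j_1})-(a_{i,j_2}+x_{j_2})|$ and $|(c_{k,j_1}+x_{j_1})-(c_{k,j_2}+x_{j_2})|$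 over all $i,k,j_1,j_2$. Tangent digraph $\mathcal{G}(x)$ on $U=\{u_1..u_p\}$, $V=[n]$, $W=\{w_1..w_m\}$ with edges $E_1(x)=\{(u_k,j):\max_{j'}(c_{k,j'}+x_{j'})=c_{k,j}+x_j\}$, $E_2(x)=\{(w_i,j):\max_{j'}(a_{i,j'}+x_{j'})=a^-_{i,j}+x_j\}$, $E_3(x)=\{(j,w_i):\max_{j'}(a_{i,j'}+x_{j'})=a^+_{i,j}+x_j\}$. $\mathcal{N}_U(J,x)=\{u_k:(u_k,j)\in E_1(x)\text{ for some }j\in J\}$, $\mathcal{N}^-_W(j,x)=\{w_i:(w_i,j)\in E_2(x)\}$, $\mathcal{N}^-_V(w_i,x)=\{j:(j,w_i)\in E_3(x)\}$, and $\mu(J,x)=\sum_{u_k\in\mathcal{N}_U(J,x)}\mu^+_k-\sum_{j\in J}\mu^-_j$. *)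

(* Defs.v *)
(* Tropical (max-plus) data: an element of R_max = R ∪ {-oo}
   is represented as [option R], with [None] standing for -oo. *)
From HB Require Import structures.
From mathcomp Require Import all_boot all_order all_algebra.
Set Implicit Arguments. Unset Strict Implicit. Unset Printing Implicit Defensive.
Import Order.TTheory GRing.Theory Num.Theory.
Local Open Scope ring_scope.

Section Tropical.
Variable R : realFieldType.

Definition ole (a b : option R) : bool :=
  match a, b with
  | None, _ => true
  | Some _, None => false
  | Some a, Some b => a <= b
  end.

Definition omax (a b : option R) : option R := if ole a b then b else a.

Definition addv (a : option R) (t : R) : option R := omap (fun a => a + t) a.

Variables m n p : nat.

Definition rowmax (r : 'I_n -> option R) (x : 'I_n -> R) : option R :=
  \big[omax/None]_(j < n) addv (r j) (x j).

Variables (Ap Am : 'I_m -> 'I_n -> option R) (C : 'I_p -> 'I_n -> option R)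
          (mup : 'I_p -> nat) (mum : 'I_n -> nat).

Definition Amat (i : 'I_m) (j : 'I_n) : option R := omax (Ap i j) (Am i j).

(* the objective f (each row of C has a finite entry, so the maxima are
   finite; [odflt 0] is only used to extract the real value) *)
Definition fobj (x : 'I_n -> R) : R :=
  \sum_(k < p) (mup k)%:R * odflt 0 (rowmax (C k) x) - \sum_(j < n) (mum j)%:R * x j.

Definition inS (x : 'I_n -> R) : Prop :=
  forall i : 'I_m, ole (rowmax (Am i) x) (rowmax (Ap i) x).

(* "0 < delta < eps(x)" unfolded: delta is below every positive value among the
   finite differences |(a_{i,j1}+x_{j1}) - (a_{i,j2}+x_{j2})| and
   |(c_{k,j1}+x_{j1}) - (c_{k,j2}+x_{j2})| (eps(x) = +oo if there is none). *)
Definition below_eps (x : 'I_n -> R) (delta : R) : Prop :=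
  (forall (i : 'I_m) (j1 j2 : 'I_n) (a1 a2 : R),
      Amat i j1 = Some a1 -> Amat i j2 = Some a2 ->
      0 < `|(a1 + x j1) - (a2 + x j2)| -> delta < `|(a1 + x j1) - (a2 + x j2)|) /\
  (forall (k : 'I_p) (j1 j2 : 'I_n) (c1 c2 : R),
      C k j1 = Some c1 -> C k j2 = Some c2 ->
      0 < `|(c1 + x j1) - (c2 + x j2)| -> delta < `|(c1 + x j1) - (c2 + x j2)|).

Definition shift (x : 'I_n -> R) (J : {set 'I_n}) (delta : R) : 'I_n -> R :=
  fun j => x j + (if j \in J then delta else 0).

Definition feasible_descent (x : 'I_n -> R) (J : {set 'I_n}) : Prop :=
  forall delta : R, 0 < delta -> below_eps x delta ->
    inS (shift x J delta) /\ fobj (shift x J delta) < fobj x.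

Definition E1 (x : 'I_n -> R) (k : 'I_p) (j : 'I_n) : bool :=
  rowmax (C k) x == addv (C k j) (x j).
Definition E2 (x : 'I_n -> R) (i : 'I_m) (j : 'I_n) : bool :=
  rowmax (Amat i) x == addv (Am i j) (x j).
Definition E3 (x : 'I_n -> R) (j : 'I_n) (i : 'I_m) : bool :=
  rowmax (Amat i) x == addv (Ap i j) (x j).

Definition NU (J : {set 'I_n}) (x : 'I_n -> R) : {set 'I_p} :=
  [set k | [exists j in J, E1 x k j]].
Definition NW (j : 'I_n) (x : 'I_n -> R) : {set 'I_m} := [set i | E2 x i j].
Definition NV (i : 'I_m) (x : 'I_n -> R) : {set 'I_n} := [set j | E3 x j i].

Definition muJ (J : {set 'I_n}) (x : 'I_n -> R) : int :=
  \sum_(k in NU J x) (mup k)%:Z - \sum_(j in J) (mum j)%:Z.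

(* the undirected graph on U ∪ V ∪ W, vertices u_k = inl (inl k),
   j = inl (inr j), w_i = inr i *)
Definition vert := ('I_p + 'I_n + 'I_m)%type.
Definition adj : rel vert := fun u v =>
  match u, v with
  | inl (inl k), inl (inr j) => C k j != None
  | inl (inr j), inl (inl k) => C k j != None
  | inr i, inl (inr j) => Amat i j != None
  | inl (inr j), inr i => Amat i j != None
  | _, _ => false
  end.
Definition graph_connected : Prop := forall u v : vert, connect adj u v.

End Tropical.

(* Main.v *)
Require Import Defs.
From HB Require Import structures.
From mathcomp Require Import all_boot all_order all_algebra.
From mathcomp Require Import lra.
Set Implicit Arguments. Unset Strict Implicit. Unset Printing Implicit Defensive.
Import Order.TTheory GRing.Theory Num.Theory.
Local Open Scope ring_scope.

Section Aux.
Variable R : realFieldType.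
Implicit Types a b c : option R.

Lemma ole_refl a : ole a a.
Proof. by case: a => //= a; rewrite lexx. Qed.

Lemma ole_trans a b c : ole a b -> ole b c -> ole a c.
Proof. case: a => [a|] //; case: b => [b|] //; case: c => [c|] //=. exact: le_trans. Qed.

Lemma ole_total a b : ole a b || ole b a.
Proof. case: a => [a|]; case: b => [b|] //=; exact: le_total. Qed.

Lemma ole_anti a b : ole a b -> ole b a -> a = b.
Proof. case: a => [a|]; case: b => [b|] //= h1 h2. by rewrite (@le_anti _ _ a b) ?h1 ?h2. Qed.

Lemma omax_l a b : ole a (omax a b).
Proof. rewrite /omax; case: ifP => h //; exact: ole_refl. Qed.

Lemma omax_r a b : ole b (omax a b).
Proof. rewrite /omax; case: ifP => h; first exact: ole_refl.
by have := ole_total a b; rewrite h. Qed.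

Lemma omax_cases a b : omax a b = a \/ omax a b = b.
Proof. rewrite /omax; case: ifP; auto. Qed.

Lemma omax_le a b c : ole a c -> ole b c -> ole (omax a b) c.
Proof. by rewrite /omax; case: ifP. Qed.

Lemma addv_mono a b t : ole a b -> ole (Defs.addv a t) (Defs.addv b t).
Proof. case: a => [a|]; case: b => [b|] //=; by rewrite lerD2r. Qed.

Variable n : nat.
Implicit Types (r : 'I_n -> option R) (x : 'I_n -> R).

Lemma big_omax_ub (s : seq 'I_n) (F : 'I_n -> option R) j :
  j \in s -> ole (F j) (\big[@omax R/None]_(i <- s) F i).
Proof.
elim: s => [|a s IH] //=. rewrite big_cons in_cons => /orP [/eqP -> | /IH h].
  exact: omax_l.
exact: ole_trans h (omax_r _ _).
Qed.

Lemma big_omax_att (s : seq 'I_n) (F : 'I_n -> option R) :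
  \big[@omax R/None]_(i <- s) F i = None \/
  exists j, \big[@omax R/None]_(i <- s) F i = F j.
Proof.
elim: s => [|a s IH]; first by rewrite big_nil; left.
rewrite big_cons. case: (omax_cases (F a) (\big[@omax R/None]_(i <- s) F i)) => ->.
  by right; exists a.
by [].
Qed.

Lemma big_omax_le (s : seq 'I_n) (F : 'I_n -> option R) c :
  (forall j, ole (F j) c) -> ole (\big[@omax R/None]_(i <- s) F i) c.
Proof.
move=> h; elim: s => [|a s IH]; first by rewrite big_nil.
rewrite big_cons; exact: omax_le.
Qed.

Lemma rowmax_ub r x j : ole (Defs.addv (r j) (x j)) (rowmax r x).
Proof. apply: big_omax_ub; exact: mem_index_enum. Qed.

Lemma rowmax_att r x : rowmax r x = None \/ exists j, rowmax r x = Defs.addv (r j) (x j).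
Proof. exact: big_omax_att. Qed.

Lemma rowmax_le r x c : (forall j, ole (Defs.addv (r j) (x j)) c) -> ole (rowmax r x) c.
Proof. exact: big_omax_le. Qed.

Lemma rowmax_spec r x : (exists j, r j != None) ->
  exists M, [/\ rowmax r x = Some M,
     exists j0, Defs.addv (r j0) (x j0) = Some M &
     forall j (a : R), r j = Some a -> a + x j <= M].
Proof.
case=> j1 hj1.
have hub := rowmax_ub r x.
case: (rowmax_att r x) => [hN|[j0 h0]].
  by have := hub j1; rewrite hN; case: (r j1) hj1.
case E: (rowmax r x) => [M|]; last first.
  by have := hub j1; rewrite E; case: (r j1) hj1.
exists M; split => //; first by exists j0; rewrite -h0.
by move=> j a ha; have := hub j; rewrite E ha.
Qed.

Lemma shiftE x (J : {set 'I_n}) d j : shift x J d j = x j + (if j \in J then d else 0).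
Proof. by []. Qed.

Lemma rowmax_shift r x (J : {set 'I_n}) d M : 0 < d -> rowmax r x = Some M ->
  (forall j (a : R), r j = Some a -> a + x j = M \/ a + x j + d < M) ->
  rowmax r (shift x J d) =
    Some (M + if [exists j in J, rowmax r x == Defs.addv (r j) (x j)] then d else 0).
Proof.
move=> hd hM hgap.
have hub := rowmax_ub r x; rewrite hM in hub.
apply: ole_anti.
  apply: rowmax_le => j; rewrite shiftE.
  case E: (r j) => [a|] //=.
  have := hub j; rewrite E /= => haM.
  case: (hgap j a E) => h.
    case: ifP => hj.
      have -> : [exists j in J, rowmax r x == Defs.addv (r j) (x j)].
        by apply/existsP; exists j; rewrite hj hM E /= h.
      lra.
    case: ifP => _; lra.
  case: ifP => _; case: ifP => _; lra.
case: ifP.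
  case/existsP => j /andP [hj /eqP he].
  apply: ole_trans (rowmax_ub _ _ j); rewrite shiftE hj.
  move: he; rewrite hM; case: (r j) => //= a [->]; by rewrite addrA lexx.
move/negbT => hn.
case: (rowmax_att r x) => [|[j0 h0]]; first by rewrite hM.
apply: ole_trans (rowmax_ub _ _ j0); rewrite shiftE.
have hj0 : j0 \notin J.
  apply/negP => hj; move/existsP: hn; apply; exists j0; rewrite hj /=; apply/eqP; exact h0.
rewrite (negbTE hj0); move: h0; rewrite hM; case: (r j0) => //= a [->].
by rewrite !addr0 lexx.
Qed.

End Aux.

Lemma exists_pos (R : realFieldType) (T : finType) (F : T -> R) :
  (forall t, 0 < F t) -> exists2 e, 0 < e & forall t, e < F t.
Proof.
move=> hF.
suff [e he1 he2] : exists2 e : R, 0 < e & forall t, t \in enum T -> e < F t.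
  by exists e => // t; apply: he2; rewrite mem_enum.
elim: (enum T) => [|a s [e he1 he2]]; first by exists 1.
exists (if F a / 2 < e then F a / 2 else e).
  by case: ifP => //; have := hF a; lra.
move=> t; rewrite in_cons => /orP [/eqP ->|ht].
  have := hF a; case: ifP => h; lra.
have := he2 t ht; case: ifP => h; lra.
Qed.

Section Main.
Variable R : realFieldType.
Variables m n p : nat.
Variables (Ap Am : 'I_m -> 'I_n -> option R) (C : 'I_p -> 'I_n -> option R)
          (mup : 'I_p -> nat) (mum : 'I_n -> nat).

Lemma exists_delta x : exists2 d, 0 < d & below_eps Ap Am C x d.
Proof.
pose g (t : 'I_m * 'I_n * 'I_n) : R :=
  match Amat Ap Am t.1.1 t.1.2, Amat Ap Am t.1.1 t.2 with
  | Some a1, Some a2 => let v := `|(a1 + x t.1.2) - (a2 + x t.2)| in if 0 < v then v else 1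
  | _, _ => 1 end.
pose h (t : 'I_p * 'I_n * 'I_n) : R :=
  match C t.1.1 t.1.2, C t.1.1 t.2 with
  | Some a1, Some a2 => let v := `|(a1 + x t.1.2) - (a2 + x t.2)| in if 0 < v then v else 1
  | _, _ => 1 end.
have [e1 he1 hg] : exists2 e, 0 < e & forall t, e < g t.
  apply: exists_pos => t; rewrite /g.
  case: (Amat _ _ _ _) => [a1|] //; case: (Amat _ _ _ _) => [a2|] //=.
  by case: ifP.
have [e2 he2 hh] : exists2 e, 0 < e & forall t, e < h t.
  apply: exists_pos => t; rewrite /h.
  case: (C _ _) => [a1|] //; case: (C _ _) => [a2|] //=.
  by case: ifP.
exists (if e1 < e2 then e1 else e2); first by case: ifP.
split.
  move=> i j1 j2 a1 a2 h1 h2 hpos.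
  have := hg (i, j1, j2); rewrite /g /= h1 h2 /= hpos /=.
  move=> hg0; case: (ltP e1 e2) => hc; lra.
move=> k j1 j2 a1 a2 h1 h2 hpos.
have := hh (k, j1, j2); rewrite /h /= h1 h2 /= hpos /=.
move=> hg0; case: (ltP e1 e2) => hc; lra.
Qed.

Lemma fobj_shift x (J : {set 'I_n}) d :
  (forall k : 'I_p, exists j : 'I_n, C k j != None) ->
  0 < d -> below_eps Ap Am C x d ->
  fobj C mup mum (shift x J d) = fobj C mup mum x +
    d * ((\sum_(k in NU C J x) mup k)%N%:R - (\sum_(j in J) mum j)%N%:R).
Proof.
move=> hC hd [_ hbe].
have hk : forall k, rowmax (C k) (shift x J d) =
    Some (odflt 0 (rowmax (C k) x) + if k \in NU C J x then d else 0).
  move=> k; have [M [hM [j0 hj0] hle]] := rowmax_spec x (hC k).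
  rewrite hM /= inE (rowmax_shift J hd hM) //.
  move=> j a ha; have hl := hle j a ha.
  case: (eqVneq (a + x j) M) => [->|hne]; [by left | right].
  have hlt : a + x j < M by rewrite lt_neqAle hne hl.
  case E0: (C k j0) hj0 => [c0|] //= [hc0].
  have := hbe k j0 j c0 a E0 ha; rewrite hc0 ger0_norm; last by lra.
  move=> /(_ _); rewrite subr_gt0 => /(_ hlt); lra.
rewrite /fobj.
have -> : \sum_(k < p) (mup k)%:R * odflt 0 (rowmax (C k) (shift x J d)) =
  \sum_(k < p) (mup k)%:R * odflt 0 (rowmax (C k) x) +
  \sum_(k < p) (mup k)%:R * (if k \in NU C J x then d else 0).
  by rewrite -big_split; apply: eq_bigr => k _; rewrite hk /= mulrDr.
have -> : \sum_(j < n) (mum j)%:R * shift x J d j =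
  \sum_(j < n) (mum j)%:R * x j +
  \sum_(j < n) (mum j)%:R * (if j \in J then d else 0).
  by rewrite -big_split; apply: eq_bigr => j _; rewrite shiftE mulrDr.
have -> : \sum_(k < p) (mup k)%:R * (if k \in NU C J x then d else 0) =
          d * (\sum_(k in NU C J x) mup k)%N%:R.
  rewrite natr_sum mulr_sumr [in RHS]big_mkcond; apply: eq_bigr => k _.
  by case: ifP => _; rewrite ?mulr0 // mulrC.
have -> : \sum_(j < n) (mum j)%:R * (if j \in J then d else 0) =
          d * (\sum_(j in J) mum j)%N%:R.
  rewrite natr_sum mulr_sumr [in RHS]big_mkcond; apply: eq_bigr => k _.
  by case: ifP => _; rewrite ?mulr0 // mulrC.
rewrite mulrBr; lra.
Qed.

End Main.

Section Main2.
Variable R : realFieldType.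
Variables m n p : nat.
Variables (Ap Am : 'I_m -> 'I_n -> option R).

Lemma Amat_ge_p i j (a : R) : Ap i j = Some a -> exists2 b, Amat Ap Am i j = Some b & a <= b.
Proof.
move=> h; have := omax_l (Ap i j) (Am i j); rewrite -/(Amat Ap Am i j) h.
by case: (Amat Ap Am i j) => // b hb; exists b.
Qed.

Lemma Amat_ge_m i j (a : R) : Am i j = Some a -> exists2 b, Amat Ap Am i j = Some b & a <= b.
Proof.
move=> h; have := omax_r (Ap i j) (Am i j); rewrite -/(Amat Ap Am i j) h.
by case: (Amat Ap Am i j) => // b hb; exists b.
Qed.

Lemma row_facts x i : (exists j, Amat Ap Am i j != None) ->
  ole (rowmax (Am i) x) (rowmax (Ap i) x) ->
  exists M, [/\ rowmax (Amat Ap Am i) x = Some M,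
    exists j1 c, Ap i j1 = Some c /\ c + x j1 = M,
    forall j (b : R), Amat Ap Am i j = Some b -> b + x j <= M,
    forall j (a : R), Ap i j = Some a -> a + x j <= M &
    forall j (a : R), Am i j = Some a -> a + x j <= M].
Proof.
move=> hA hx.
have [M [hM [j0 hj0] hle]] := rowmax_spec x hA.
have hlep : forall j (a : R), Ap i j = Some a -> a + x j <= M.
  move=> j a ha; have [b hb hab] := Amat_ge_p ha; have := hle j b hb; lra.
have hlem : forall j (a : R), Am i j = Some a -> a + x j <= M.
  move=> j a ha; have [b hb hab] := Amat_ge_m ha; have := hle j b hb; lra.
exists M; split => //.
have hge : ole (Some M) (rowmax (Ap i) x).
  case: (omax_cases (Ap i j0) (Am i j0)); rewrite -/(Amat Ap Am i j0) => he; rewrite he in hj0.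
    by rewrite -hj0; apply: rowmax_ub.
  by apply: ole_trans hx; rewrite -hj0; apply: rowmax_ub.
case: (rowmax_att (Ap i) x) hge => [->|[j1 ->]] //.
case E: (Ap i j1) => [c|] //= hc.
exists j1, c; split => //; have := hlep j1 c E; lra.
Qed.

End Main2.

Theorem theorem4p1 (R : realFieldType) (m n p : nat)
  (Ap Am : 'I_m -> 'I_n -> option R) (C : 'I_p -> 'I_n -> option R)
  (mup : 'I_p -> nat) (mum : 'I_n -> nat)
  (hA : forall i : 'I_m, exists j : 'I_n, Amat Ap Am i j != None)
  (hC : forall k : 'I_p, exists j : 'I_n, C k j != None)
  (hmu : (\sum_(k < p) mup k = \sum_(j < n) mum j)%N)
  (hconn : graph_connected Ap Am C)
  (x : 'I_n -> R) (hx : inS Ap Am x) (J : {set 'I_n}) :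
  feasible_descent Ap Am C mup mum x J <->
  ((forall j : 'I_n, j \in J -> forall i : 'I_m, i \in NW Ap Am j x ->
      exists2 j' : 'I_n, j' \in NV Ap Am i x & j' \in J)
   /\ muJ C mup mum J x < 0).
Proof.
have hmuE : (muJ C mup mum J x < 0) =
   ((\sum_(k in NU C J x) mup k)%N%:R - (\sum_(j in J) mum j)%N%:R < 0 :> R).
  rewrite /muJ -!(big_morph Posz PoszD (erefl 0%:Z)) subr_lt0 ltz_nat.
  by rewrite subr_lt0 ltr_nat.
split.
  move=> hfd.
  have [d hd hbe] := exists_delta Ap Am C x.
  have [hS hf] := hfd d hd hbe.
  split; last first.
    rewrite hmuE; move: hf; rewrite (fobj_shift _ _ _ hC hd hbe).
    set t := (_ - _); rewrite -subr_lt0 addrC addKr pmulr_rlt0 //.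
  move=> j hj i hi.
  case: (boolP [exists j', (j' \in NV Ap Am i x) && (j' \in J)]).
    by case/existsP => j' /andP [h1 h2]; exists j'.
  move=> hno; exfalso.
  have [M [hM [j1 [c [hc1 hc2]]] hleA hleP hleM]] := row_facts (hA i) (hx i).
  move: hi; rewrite inE /E2 hM.
  case Ea: (Am i j) => [a|] //= /eqP [haM].
  have h1 : ole (Some (M + d)) (rowmax (Am i) (shift x J d)).
    apply: ole_trans (rowmax_ub _ _ j); rewrite shiftE hj Ea /= haM addrA lexx //.
  have h2 := ole_trans h1 (hS i).
  case: (rowmax_att (Ap i) (shift x J d)) h2 => [->|[j' ->]] //.
  rewrite shiftE; case Ec: (Ap i j') => [c'|] //=.
  have hl := hleP j' c' Ec.
  case: ifP => hj'.
    have hne : c' + x j' != M.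
      apply/negP => /eqP he; move/existsP: hno; apply; exists j'.
      by rewrite hj' andbT inE /E3 hM Ec /= he.
    have hlt : c' + x j' < M by rewrite lt_neqAle hne hl.
    lra.
  lra.
move=> [h1 hmu0] d hd hbe; split; last first.
  rewrite (fobj_shift _ _ _ hC hd hbe).
  move: hmu0; rewrite hmuE => hneg.
  have : d * ((\sum_(k in NU C J x) mup k)%N%:R - (\sum_(j in J) mum j)%N%:R) < 0.
    by rewrite pmulr_rlt0.
  lra.
move=> i.
have [M [hM [j1 [c [hc1 hc2]]] hleA hleP hleM]] := row_facts (hA i) (hx i).
have hge : ole (Some M) (rowmax (Ap i) (shift x J d)).
  apply: ole_trans (rowmax_ub _ _ j1); rewrite shiftE hc1 /=.
  case: ifP => _; lra.
apply: rowmax_le => j; rewrite shiftE.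
case Ea: (Am i j) => [a|] //.
have hl := hleM j a Ea.
case: ifP => hj; last by apply: (ole_trans _ hge); rewrite /= addr0.
case: (eqVneq (a + x j) M) => [haM|hne].
  have hi : i \in NW Ap Am j x by rewrite inE /E2 hM Ea /= haM.
  have [j' hj'1 hj'2] := h1 j hj i hi.
  move: hj'1; rewrite inE /E3 hM; case Ec: (Ap i j') => [c'|] //; rewrite [Defs.addv _ _]/= => /eqP [hc'].
  apply: ole_trans (rowmax_ub _ _ j'); rewrite shiftE hj'2 Ec /=; lra.
have hlt : a + x j < M by rewrite lt_neqAle hne hl.
have [b hb hab] := Amat_ge_m Ap Ea.
have hbl := hleA j b hb.
case: (eqVneq (b + x j) M) => [hbM|hbne].
  have hAp : Ap i j = Some b.
    case: (omax_cases (Ap i j) (Am i j)); rewrite -/(Amat Ap Am i j) hb => he.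
      by rewrite -he.
    move: he; rewrite Ea => -[hba]; exfalso; move: hbM hlt; rewrite hba => ->; lra.
  apply: ole_trans (rowmax_ub _ _ j); rewrite shiftE hj hAp /=; lra.
have hblt : b + x j < M by rewrite lt_neqAle hbne hbl.
have [_ hbe2] := hbe.
have [j0 hj0] : exists j0, Defs.addv (Amat Ap Am i j0) (x j0) = Some M.
  case: (rowmax_att (Amat Ap Am i) x) => [|[j0 h0]]; first by rewrite hM.
  by exists j0; rewrite -h0.
case E0: (Amat Ap Am i j0) hj0 => [b0|] //= [hb0].
have := (proj1 hbe) i j0 j b0 b E0 hb.
rewrite hb0 ger0_norm; last by lra.
move=> /(_ _); rewrite subr_gt0 => /(_ hblt) hdl.
change (ole (Some (a + (x j + d))) (rowmax (Ap i) (shift x J d))).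
apply: (ole_trans _ hge) => /=; lra.
Qed.
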